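(* Let $G$ be a connected graph with $|V(G)| \ge 3$ and $\det(G) = 1$. Then $\det'(G) = 2$ if $G$ is edge-flip-invariant, and $\det'(G) = 1$ otherwise.
   Context: $G$ is edge-flip-invariant if for every edge $\{u,v\}\in E(G)$ there is an automorphism $\phi$ of $G$ with $\phi(u)=v$ and $\phi(v)=u$. A vertex subset $S$ of $G$ is a vertex determining set if the only automorphism of $G$ fixing every vertex of $S$ is the identity; the determining number $\det(G)$ is the minimum size of a vertex determining set. For a graph $G$ with at most one isolated vertex and no component isomorphic to $K_2$, an edge subset $T$ is an edge determining set if the only automorphism $\phi$ of $G$ satisfying $\{\phi(u),\phi(v)\}=\{u,v\}$ for all $\{u,v\}\in T$ is the identity; the determining index $\det'(G)$ is the minimum size of an edge determining set. *)

(* Defs.v *)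
(* A finite simple graph is a symmetric irreflexive relation
   e : rel T on a finType T (vertices = T). *)
From mathcomp Require Import all_boot all_fingroup.
Set Implicit Arguments. Unset Strict Implicit. Unset Printing Implicit Defensive.

Section Defs.
Variable T : finType.
Variable e : rel T.

Definition is_aut (phi : {perm T}) : Prop :=
  forall x y, e (phi x) (phi y) = e x y.

Definition connected_graph : Prop := forall x y : T, connect e x y.

Definition edges : {set {set T}} :=
  [set [set p.1; p.2] | p in [pred p : T * T | e p.1 p.2]].

Definition edge_flip_invariant : Prop :=
  forall u v, e u v -> exists phi : {perm T}, is_aut phi /\ phi u = v /\ phi v = u.

Definition vertex_determining (S : {set T}) : Prop :=
  forall phi : {perm T}, is_aut phi -> (forall x, x \in S -> phi x = x) -> phi = 1%g.

Definition determining_number_is (k : nat) : Prop :=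
  (exists S : {set T}, vertex_determining S /\ #|S| = k) /\
  (forall S : {set T}, vertex_determining S -> k <= #|S|).

Definition edge_determining (S : {set {set T}}) : Prop :=
  S \subset edges /\
  forall phi : {perm T}, is_aut phi ->
    (forall A, A \in S -> phi @: A = A) -> phi = 1%g.

Definition determining_index_is (k : nat) : Prop :=
  (exists S : {set {set T}}, edge_determining S /\ #|S| = k) /\
  (forall S : {set {set T}}, edge_determining S -> k <= #|S|).

End Defs.

(* Main.v *)
Require Import Defs.
From mathcomp Require Import all_boot all_fingroup.
From Stdlib Require Import Classical.
Set Implicit Arguments. Unset Strict Implicit.

Section Aux.
Variable T : finType.
Variable e : rel T.
Hypothesis e_sym : symmetric e.
Hypothesis e_irr : irreflexive e.

Lemma aut_mul (p q : {perm T}) : is_aut e p -> is_aut e q -> is_aut e (p * q)%g.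
Proof. by move=> hp hq x y; rewrite !permM hq hp. Qed.

Lemma aut_inv (p : {perm T}) : is_aut e p -> is_aut e p^-1%g.
Proof. by move=> hp x y; rewrite -hp !permKV. Qed.

Lemma im2 (p : {perm T}) a b : p @: [set a; b] = [set p a; p b].
Proof. by rewrite imsetU1 imset_set1. Qed.

Lemma im2_mem (p : {perm T}) a b :
  p @: [set a; b] = [set a; b] -> (p a \in [set a; b]) /\ (p b \in [set a; b]).
Proof.
move=> h; rewrite -{1}h -{2}h im2 !inE !eqxx; split; [by rewrite orTb | by rewrite orbT].
Qed.

Lemma edge_in a b : e a b -> [set a; b] \in edges e.
Proof. by move=> h; apply/imsetP; exists (a, b). Qed.

Lemma exit_set (A : {set T}) : connected_graph e -> A != set0 -> #|A| < #|T| ->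
  exists x y, x \in A /\ y \notin A /\ e x y.
Proof.
move=> Gc /set0Pn [a aA] lt.
case: (boolP [exists x in A, exists y in ~: A, e x y]).
  case/exists_inP=> x xA /exists_inP [y]; rewrite inE => yA exy.
  by exists x, y.
move=> /exists_inPn hn.
have cl : closed e (mem A).
  move=> x y exy.
  have key : forall u w, e u w -> u \in A -> w \in A.
    move=> u w euw uA; apply/negPn/negP => wA.
    by move: (hn u uA) => /exists_inPn /(_ w); rewrite inE => /(_ wA); rewrite euw.
  apply/idP/idP; first exact: key.
  by apply: key; rewrite e_sym.
have [z zA] : exists z, z \notin A.
  case: (boolP [exists z, z \notin A]); first by case/existsP=> z; exists z.
  move/existsPn=> hz; have : A = setT by apply/setP=> z; rewrite inE; apply/negPn.
  by move=> eA; move: lt; rewrite eA cardsT ltnn.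
by move: (closed_connect cl (Gc a z)); rewrite aA (negbTE zA).
Qed.

End Aux.

Theorem corollary2 (T : finType) (e : rel T)
    (e_sym : symmetric e) (e_irr : irreflexive e)
    (Gconn : connected_graph e) (Gsize : 3 <= #|T|)
    (Gdet : determining_number_is e 1) :
  (edge_flip_invariant e -> determining_index_is e 2) /\
  (~ edge_flip_invariant e -> determining_index_is e 1).
Proof.
case: Gdet => [[S [detS cS]] lb].
have [v Sv] : exists v, S = [set v] by apply/cards1P/eqP.
subst S.
have detv : forall phi : {perm T}, is_aut e phi -> phi v = v -> phi = 1%g.
  by move=> phi ap fv; apply: detS => // x; rewrite inE => /eqP ->.
(* nontrivial aut group: no empty edge det set *)
have nz : forall S, edge_determining e S -> S != set0.
  move=> S [_ hS]; apply/negP=> /eqP S0.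
  have : 1 <= #|(set0 : {set T})|.
    apply: lb => phi ap _; apply: hS => // A; by rewrite S0 inE.
  by rewrite cards0.
have nzc : forall S, edge_determining e S -> 1 <= #|S|.
  by move=> S /nz; rewrite card_gt0.
have [v' [w [v'v [wv evw]]]] : exists x y, x \in [set v] /\ y \notin [set v] /\ e x y.
  apply: exit_set => //; first by apply/set0Pn; exists v; rewrite inE.
  by rewrite cards1; apply: leq_trans Gsize.
have {v'v} v'v : v' = v by move: v'v; rewrite inE => /eqP.
subst v'.
have wnv : w != v by move: wv; rewrite inE.
split.
- move=> efi; split.
  +
    have [x [u [xA [uA exu]]]] : exists x y, x \in [set v; w] /\ y \notin [set v; w] /\ e x y.
      apply: exit_set => //; first by apply/set0Pn; exists v; rewrite !inE eqxx.
      by rewrite cards2; apply: leq_trans Gsize; case: (v != w).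
    have unv : u != v by apply: contraNneq uA => ->; rewrite !inE eqxx.
    have unw : u != w by apply: contraNneq uA => ->; rewrite !inE eqxx orbT.
    exists [set [set v; w]; [set x; u]]; split; last first.
      rewrite cards2; suff -> : [set v; w] != [set x; u] by [].
      apply/eqP => h; move: uA; rewrite h !inE eqxx orbT //.
    split.
      apply/subsetP=> A; rewrite !inE => /orP [] /eqP ->; apply: edge_in => //.
    move=> phi ap hS.
    have h1 := im2_mem (hS _ (setU11 _ _)).
    have h2 : phi @: [set x; u] = [set x; u] by apply: hS; rewrite !inE eqxx orbT.
    have h2' := im2_mem h2.
    apply: detv => //.
    move: xA; rewrite !inE => /orP [] /eqP xe; subst x.
    + case: h1 => + _; rewrite !inE => /orP [] /eqP // pv; case: h2' => + _.
      by rewrite pv !inE (negbTE wnv) eq_sym (negbTE unw).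
    + have pw : phi w = w.
        case: h2' => + _; rewrite !inE => /orP [] /eqP // pw.
        by move: (proj2 h1); rewrite pw !inE (negbTE unv) (negbTE unw).
      case: h1 => + _; rewrite !inE => /orP [] /eqP // pv.
      have : phi v = phi w by rewrite pv pw.
      by move/perm_inj => vw; rewrite vw eqxx in wnv.
  + move=> S hS; have := nzc S hS.
    rewrite leq_eqVlt => /orP [] // /eqP c1.
    have [A SA] : exists A, S = [set A] by apply/cards1P; rewrite -c1.
    subst S; case: hS => sub hS.
    have : A \in edges e by apply: (subsetP sub); rewrite inE.
    case/imsetP=> [[a b]]; rewrite inE /= => eab Aeq; subst A.
    have [phi [ap [pa pb]]] := efi a b eab.
    have p1 : phi = 1%g.
      apply: (hS phi ap) => B; rewrite inE => /eqP ->.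
      by rewrite im2 pa pb setUC.
    move: pa; rewrite p1 perm1 => ab.
    by move: eab; rewrite ab e_irr.
- move=> nefi.
  have [w0 [evw0 nfl]] : exists w0, e v w0 /\
      ~ (exists phi : {perm T}, is_aut e phi /\ phi v = w0 /\ phi w0 = v).
    apply: NNPP => hn; apply: nefi.
    have fl : forall b, e v b -> exists psi : {perm T}, is_aut e psi /\ psi v = b /\ psi b = v.
      move=> b evb; apply: NNPP => hb; apply: hn; by exists b.
    have autb : forall phi : {perm T},
        reflect (is_aut e phi) [forall a, forall b, e (phi a) (phi b) == e a b].
      move=> phi; apply: (iffP forallP) => [h a b | h a].
        exact/eqP/(forallP (h a)).
      by apply/forallP=> b; apply/eqP/h.
    set O := [set x | [exists phi : {perm T},
        [forall a, forall b, e (phi a) (phi b) == e a b] && (phi v == x)]].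
    have Oin : forall x, x \in O <-> exists phi : {perm T}, is_aut e phi /\ phi v = x.
      move=> x; rewrite inE; split.
        by case/existsP=> phi /andP [/autb ap /eqP px]; exists phi.
      case=> phi [ap px]; apply/existsP; exists phi; rewrite px eqxx andbT.
      exact/autb.
    have key : forall x y, e x y -> x \in O -> y \in O.
      move=> x y exy /Oin [phi [ap px]].
      have evb : e v (phi^-1 y)%g by rewrite -ap permKV px.
      have [psi [aps [psv psb]]] := fl _ evb.
      apply/Oin; exists (psi * phi)%g; split; first exact: aut_mul.
      by rewrite permM psv permKV.
    have cl : closed e (mem O).
      move=> x y exy; apply/idP/idP; first exact: key.
      by apply: key; rewrite e_sym.
    have allO : forall x, x \in O.
      move=> x; rewrite -(closed_connect cl (Gconn v x)); apply/Oin.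
      exists 1%g; split; last by rewrite perm1.
      by move=> a c; rewrite !perm1.
    move=> x y exy; have [phi [ap px]] := (Oin x).1 (allO x).
    have evb : e v (phi^-1 y)%g by rewrite -ap permKV px.
    have [psi [aps [psv psb]]] := fl _ evb.
    exists (phi^-1 * psi * phi)%g; split.
      by apply: aut_mul => //; apply: aut_mul => //; apply: aut_inv.
    by rewrite !permM -px permK psv permKV psb px.
  split.
    exists [set [set v; w0]]; split; last by rewrite cards1.
    split.
      by apply/subsetP => A; rewrite inE => /eqP ->; apply: edge_in.
    move=> phi ap hS.
    have := im2_mem (hS _ (set11 _)).
    case=> + h2; rewrite !inE => /orP [] /eqP pv; first exact: detv.
    exfalso; apply: nfl; exists phi; do 2 split => //.
    move: h2; rewrite !inE => /orP [] /eqP // pw.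
    have : phi v = phi w0 by rewrite pv pw.
    by move/perm_inj => vw; rewrite -vw e_irr in evw0.
  by move=> S /nzc.
Qed.
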